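(* Let $p_1,p_2\ge 5$ be distinct primes, $\mathbb{K}_1=\mathbb{Q}(\zeta_{p_1}+\zeta_{p_1}^{-1})$, $\mathbb{K}_2=\mathbb{Q}(\zeta_{p_2}+\zeta_{p_2}^{-1})$, $e_i=\zeta_{p_1}^i+\zeta_{p_1}^{-i}$, $b_j=\zeta_{p_2}^j+\zeta_{p_2}^{-j}$, $n_1=\frac{p_1-1}{2}$, $n_2=\frac{p_2-1}{2}$, $n=n_1n_2$. Let $\mathbb{K}=\mathbb{K}_1\mathbb{K}_2$ and let $\mathcal{I}\subseteq\mathcal{O}_{\mathbb{K}}$ be the $\mathbb{Z}$-module with $\mathbb{Z}$-basis $$\gamma_1=\{e_1b_1,\dots,e_1b_{n_2},\;e_2b_1,\dots,e_2b_{n_2},\;\dots,\;e_{n_1}b_1,\dots,e_{n_1}b_{n_2-1},\,2e_{n_1}b_{n_2}\},$$ i.e. all products $e_ib_j$ ($1\le i\le n_1$, $1\le j\le n_2$) except that $e_{n_1}b_{n_2}$ is replaced by $2e_{n_1}b_{n_2}$. Let $\alpha=(2-e_1)(2-b_1)$. Then $\frac{1}{\sqrt{p_1p_2}}\sigma_\alpha(\mathcal{I})\subseteq\mathbb{R}^n$ is a rotated $D_n$-lattice.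
   Context: $\zeta_m=e^{2\pi i/m}$. $\mathbb{K}$ is totally real Galois with Galois group $\{\sigma_1,\dots,\sigma_n\}$; $\sigma_\alpha(x)=(\sqrt{\sigma_1(\alpha)}\sigma_1(x),\dots,\sqrt{\sigma_n(\alpha)}\sigma_n(x))$. $D_n=\{(x_1,\dots,x_n)\in\mathbb{Z}^n:\sum x_i\text{ even}\}$; a rotated $D_n$-lattice is $R(D_n)$ for an orthogonal linear map $R$ of $\mathbb{R}^n$. *)

(* Defs.v *)
From HB Require Import structures.
From mathcomp Require Import all_boot all_order all_algebra.
From mathcomp Require Import reals trigo.
Set Implicit Arguments. Unset Strict Implicit. Unset Printing Implicit Defensive.
Import Order.TTheory GRing.Theory Num.Theory.
Local Open Scope ring_scope.

(* Image of  zeta_p^k + zeta_p^{-k}  under the real embedding zeta_p |-> zeta_p^a,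
   i.e. 2 cos(2 pi a k / p). *)
Definition cosemb {R : realType} (p a k : nat) : R :=
  2 * cos (2 * pi * (a * k)%:R / p%:R).

(* For n = n1 * n2, index m : 'I_n corresponds to the pair
   (m %/ n2 + 1, m %% n2 + 1) in {1..n1} x {1..n2}. *)
Definition idx1 (n2 m : nat) : nat := (m %/ n2).+1.
Definition idx2 (n2 m : nat) : nat := (m %% n2).+1.

(* The coordinates: embeddings sigma_l (l : 'I_n) of K = K1 K2,
   sigma_l(e_i) = 2cos(2 pi a_l i/p1), sigma_l(b_j) = 2cos(2 pi b_l j/p2),
   with (a_l, b_l) = (idx1 n2 l, idx2 n2 l). *)

Definition sig_alpha {R : realType} (p1 p2 n2 l : nat) : R :=
  (2 - cosemb p1 (idx1 n2 l) 1) * (2 - cosemb p2 (idx2 n2 l) 1).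

Definition sig_gamma {R : realType} (p1 p2 n n2 l k : nat) : R :=
  (if k == n.-1 then 2 else 1) *
  cosemb p1 (idx1 n2 l) (idx1 n2 k) * cosemb p2 (idx2 n2 l) (idx2 n2 k).

Definition lat_vec {R : realType} (p1 p2 n n2 : nat) (k : 'I_n) : 'rV[R]_n :=
  \row_(l < n) (Num.sqrt (sig_alpha p1 p2 n2 l) * sig_gamma p1 p2 n n2 l k
                / Num.sqrt (p1 * p2)%:R).

Definition in_lattice {R : realType} (p1 p2 n n2 : nat) (x : 'rV[R]_n) : Prop :=
  exists z : 'I_n -> int, x = \sum_(k < n) (z k)%:~R *: lat_vec p1 p2 n2 k.

Definition in_Dn {R : realType} (n : nat) (x : 'rV[R]_n) : Prop :=
  exists z : 'I_n -> int, (2 %| \sum_(k < n) z k)%Z /\ x = \row_(k < n) (z k)%:~R.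

Definition rotated_Dn {R : realType} (n : nat) (L : 'rV[R]_n -> Prop) : Prop :=
  exists Q : 'M[R]_n, Q *m Q^T = 1%:M /\
    forall x : 'rV[R]_n, L x <-> exists y, in_Dn y /\ x = y *m Q.

(* Main.v *)
Require Import Defs.
From HB Require Import structures.
From mathcomp Require Import all_boot all_order all_algebra.
From mathcomp Require Import reals trigo.
From mathcomp Require Import ring lra zify.
Import Order.TTheory GRing.Theory Num.Theory.
Local Open Scope ring_scope.

Section Trig.
Variable R : realType.

Lemma prod_sc (x y : R) : 2 * sin x * cos y = sin (y + x) - sin (y - x).
Proof. rewrite sinD sinB; ring. Qed.

Lemma prod_ss (x y : R) : 2 * sin x * sin y = cos (x - y) - cos (x + y).
Proof. rewrite cosB cosD; ring. Qed.

Lemma sin_natpi (n : nat) : sin (n%:R * pi) = 0 :> R.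
Proof.
have := alternatingn (@sinDpi R) n 0; rewrite add0r sin0 mulr0 => <-.
by rewrite mulr_natl.
Qed.

Lemma tele_cos (x : R) (N : nat) :
  2 * sin x * \sum_(a < N) cos ((a.+1)%:R * 2 * x) = sin ((N.*2.+1)%:R * x) - sin x.
Proof.
elim: N => [|N IH]; first by rewrite big_ord0 mulr0 /= mul1r subrr.
rewrite big_ord_recr /= mulrDr IH prod_sc.
have -> : (N.+1%:R * 2 * x + x) = ((N.+1).*2.+1)%:R * x.
  rewrite -!mul2n; ring.
have -> : (N.+1%:R * 2 * x - x) = ((N).*2.+1)%:R * x.
  rewrite -!mul2n; ring.
ring.
Qed.

Lemma sum_cos (p N m : nat) : p = N.*2.+1 -> (0 < m < p)%N ->
  \sum_(a < N) cos (2 * pi * (m * a.+1)%:R / p%:R) = - 2^-1 :> R.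
Proof.
move=> hp /andP[m0 mp].
set x : R := pi * m%:R / p%:R.
have p0 : (0 : R) < p%:R by rewrite ltr0n; lia.
have xpos : 0 < sin x.
  apply: sin_gt0_pi; apply/andP; split.
    by rewrite /x divr_gt0 // mulr_gt0 ?pi_gt0 // ltr0n.
  by rewrite /x ltr_pdivrMr // ltr_pM2l ?pi_gt0 // ltr_nat.
have := tele_cos x N.
have -> : ((N.*2.+1)%:R * x) = m%:R * pi.
  rewrite /x -hp; field; by rewrite lt0r_neq0.
rewrite sin_natpi.
have -> : \sum_(a < N) cos ((a.+1)%:R * 2 * x) =
   \sum_(a < N) cos (2 * pi * (m * a.+1)%:R / p%:R).
  apply: eq_bigr => a _; congr cos.
  by rewrite /x natrM; field; rewrite lt0r_neq0.
move=> h.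
have hs : sin x != 0 by rewrite gt_eqF.
have h2 : 2 * sin x != 0 by rewrite mulf_neq0 // pnatr_eq0.
apply: (mulfI h2).
by rewrite h; field.
Qed.
End Trig.


Section Q.
Variable R : realType.

Definition qq (p j a : nat) : R :=
  2 / Num.sqrt p%:R * sin ((j.*2.+1)%:R * pi * a%:R / p%:R).

Lemma qq_prod (p j j' a : nat) : (0 < p)%N -> (j' <= j)%N ->
  qq p j a * qq p j' a =
  2 / p%:R * (cos (2 * pi * ((j - j') * a)%:R / p%:R)
              - cos (2 * pi * ((j + j').+1 * a)%:R / p%:R)).
Proof.
move=> p0 hj.
have hp : (0 : R) < p%:R by rewrite ltr0n.
rewrite /qq.
set A := (j.*2.+1)%:R * pi * a%:R / p%:R.
set B := (j'.*2.+1)%:R * pi * a%:R / p%:R.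
have -> : 2 / Num.sqrt p%:R * sin A * (2 / Num.sqrt p%:R * sin B) =
   2 / (Num.sqrt p%:R ^+ 2) * (2 * sin A * sin B).
  have : Num.sqrt (p%:R : R) != 0 by rewrite sqrtr_eq0 -ltNge.
  move=> h; field; done.
rewrite sqr_sqrtr ?ltW // prod_ss; congr (_ * (cos _ - cos _)).
  rewrite /A /B natrM natrB // -!mul2n; field; by rewrite lt0r_neq0.
rewrite /A /B natrM -!mul2n; field; by rewrite lt0r_neq0.
Qed.

Lemma sum_cos0 (p N : nat) :
  \sum_(a < N) cos (2 * pi * ((0 * a.+1)%N)%:R / p%:R) = N%:R :> R.
Proof.
under eq_bigr => a _ do rewrite mul0n mulr0 mul0r cos0.
by rewrite sumr_const card_ord.
Qed.

Lemma qq_orth (p N j j' : nat) : p = N.*2.+1 -> (j < N)%N -> (j' < N)%N ->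
  \sum_(a < N) qq p j a.+1 * qq p j' a.+1 = (j == j')%:R.
Proof.
move=> hp.
wlog hj : j j' / (j' <= j)%N.
  move=> H hj hj'; case: (leqP j' j) => h; first exact: H.
  rewrite eq_sym -H ?(ltnW h) //; apply: eq_bigr => a _; exact: mulrC.
move=> hjN hj'N.
have p0 : (0 < p)%N by rewrite hp.
have hpR : (0 : R) < p%:R by rewrite ltr0n.
under eq_bigr => a _ do rewrite qq_prod //.
rewrite -mulr_sumr sumrB (@sum_cos R p N (j + j').+1) //; last by lia.
case: (eqVneq j j') => [<-|hne].
  rewrite subnn sum_cos0 hp -mul2n.
  have hn : ((2 * N).+1%:R : R) != 0 by rewrite pnatr_eq0.
  rewrite /=; field.
  by move: hn; rewrite -natr1 natrM addrC.
rewrite (@sum_cos R p N (j - j')) //; last by apply/andP; split; lia.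
rewrite /=; field; by rewrite lt0r_neq0.
Qed.

Lemma qq_last (p N a : nat) : p = N.*2.+1 -> qq p N a = 0.
Proof.
move=> hp; rewrite /qq -hp.
have p0 : (p%:R : R) != 0 by rewrite pnatr_eq0 hp.
have -> : p%:R * pi * a%:R / p%:R = a%:R * pi :> R by field.
by rewrite sin_natpi mulr0.
Qed.


Lemma factor (p a i : nat) : (0 < a < p)%N ->
  Num.sqrt (2 - cosemb p a 1) * cosemb p a i.+1 / Num.sqrt p%:R =
  qq p i.+1 a - qq p i a :> R.
Proof.
move=> /andP[a0 ap].
have p0 : (0 : R) < p%:R by rewrite ltr0n; lia.
set t : R := pi * a%:R / p%:R.
have tpos : 0 < sin t.
  apply: sin_gt0_pi; apply/andP; split.
    by rewrite /t divr_gt0 // mulr_gt0 ?pi_gt0 // ltr0n.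
  by rewrite /t ltr_pdivrMr // ltr_pM2l ?pi_gt0 // ltr_nat.
have h1 : 2 - cosemb p a 1 = (2 * sin t) ^+ 2 :> R.
  rewrite /cosemb muln1.
  have -> : 2 * pi * a%:R / p%:R = t + t by rewrite /t; field; rewrite lt0r_neq0.
  rewrite cosD -!expr2 cos2sin2; ring.
rewrite h1 sqrtr_sqr gtr0_norm ?mulr_gt0 //.
rewrite /cosemb /qq.
have sq0 : Num.sqrt (p%:R : R) != 0 by rewrite sqrtr_eq0 -ltNge.
set y : R := 2 * pi * (a * i.+1)%:R / p%:R.
have -> : 2 * sin t * (2 * cos y) / Num.sqrt p%:R =
   2 / Num.sqrt p%:R * (2 * sin t * cos y) by field.
rewrite prod_sc -mulrBr; congr (_ * (sin _ - sin _)).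
  rewrite /y /t natrM -!mul2n; field; by rewrite lt0r_neq0.
rewrite /y /t natrM -!mul2n; field; by rewrite lt0r_neq0.
Qed.
End Q.


Lemma sum_pair (V : zmodType) (N1 N2 : nat) (F : nat -> nat -> V) : (0 < N2)%N ->
  \sum_(l < N1 * N2) F (l %/ N2)%N (l %% N2)%N = \sum_(a < N1) \sum_(b < N2) F a b.
Proof.
move=> N20.
rewrite -(big_mkord xpredT (fun l => F (l %/ N2)%N (l %% N2)%N)).
elim: N1 => [|N1 IH]; first by rewrite mul0n big_ord0 big_geq.
rewrite mulSnr (@big_cat_nat _ _ _ (N1 * N2)) ?leq_addr //= IH big_ord_recr /=.
congr (_ + _).
rewrite -[X in \sum_(X <= _ < _) _]add0n big_addn addKn big_mkord.
apply: eq_bigr => b _.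
have hb := ltn_ord b.
have -> : ((b + N1 * N2) %/ N2 = N1)%N by rewrite divnDMl // divn_small.
have -> : ((b + N1 * N2) %% N2 = b)%N by rewrite addnC modnMDl modn_small.
done.
Qed.

Definition delt {V : pzRingType} (x t : nat) : V := (x == t)%:R.

Lemma D1 (V : pzRingType) (N t : nat) (g : nat -> V) :
  \sum_(a < N) delt a t * g a = (t < N)%:R * g t.
Proof.
elim: N => [|N IH]; first by rewrite big_ord0 ltn0 mul0r.
rewrite big_ord_recr /= IH /delt.
case: (ltngtP t N) => h.
- by rewrite ltnS (ltnW h) mul0r addr0.
- by rewrite ltnS leqNgt h /= !mul0r addr0.
- by rewrite h ltnSn mul0r add0r.
Qed.

Lemma D3 (V : pzRingType) (N t : nat) (g : nat -> V) : (t < N)%N -> g N = 0 ->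
  \sum_(a < N) (delt a t.+1 - delt a t) * g a = g t.+1 - g t.
Proof.
move=> tN gN.
under eq_bigr => a _ do rewrite mulrBl.
rewrite sumrB !D1 tN mul1r.
move: tN; rewrite leq_eqVlt => /orP[/eqP e|->]; last by rewrite mul1r.
by rewrite e ltnn gN mulr0.
Qed.

Lemma tele (V : pzRingType) (N i : nat) (u : nat -> V) :
  \sum_(a < N) (i <= a)%:R * (u a.+1 - u a) = (i <= N)%:R * (u N - u i).
Proof.
elim: N => [|N IH]; first by rewrite big_ord0; case: i => [|i]; rewrite ?subrr ?mulr0 //= mul0r.
rewrite big_ord_recr /= IH.
case: (ltngtP i N) => h.
- rewrite (leq_trans (ltnW h) (leqnSn _)) !mul1r; by rewrite addrC addrA subrK.
- rewrite !mul0r add0r; case: (leqP i N.+1) => h2; last by rewrite mul0r.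
  have -> : i = N.+1 by apply/eqP; rewrite eqn_leq h2 h.
  by rewrite subrr mulr0.
- by rewrite -h leqnSn !mul1r subrr add0r.
Qed.

Lemma pair_eq (N2 m m' : nat) : (0 < N2)%N ->
  (m == m') = (m %/ N2 == m' %/ N2)%N && (m %% N2 == m' %% N2)%N.
Proof.
move=> N20; apply/eqP/andP => [->|[/eqP h1 /eqP h2]]; first by [].
by rewrite (divn_eq m N2) (divn_eq m' N2) h1 h2.
Qed.

Lemma last_div (N1 N2 : nat) : (0 < N1)%N -> (0 < N2)%N ->
  ((N1 * N2).-1 %/ N2 = N1.-1)%N /\ ((N1 * N2).-1 %% N2 = N2.-1)%N.
Proof.
move=> h1 h2.
have e : ((N1 * N2).-1 = N1.-1 * N2 + N2.-1)%N.
  case: N1 h1 => // a _; case: N2 h2 => // b _ /=; lia.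
rewrite e divnMDl // modnMDl divn_small ?modn_small ?addn0 //; lia.
Qed.

Lemma sum_pair' (V : zmodType) (N1 N2 : nat) (G : 'I_(N1 * N2) -> V)
  (F : nat -> nat -> V) : (0 < N2)%N ->
  (forall l : 'I_(N1 * N2), G l = F (l %/ N2)%N (l %% N2)%N) ->
  \sum_(l < N1 * N2) G l = \sum_(a < N1) \sum_(b < N2) F a b.
Proof. by move=> h e; rewrite -sum_pair //; apply: eq_bigr => l _. Qed.

Definition Pp {V : pzRingType} (N2 k m : nat) : V :=
  (delt (m %/ N2)%N (k %/ N2).+1 - delt (m %/ N2)%N (k %/ N2)%N) *
  (delt (m %% N2)%N (k %% N2).+1 - delt (m %% N2)%N (k %% N2)%N).

Definition Pg {V : pzRingType} (N1 N2 k m : nat) : V :=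
  (if k == (N1 * N2).-1 then 2 else 1) * Pp N2 k m.

Definition zm {V : pzRingType} (N1 N2 m k : nat) : V :=
  (k != (N1 * N2).-1)%:R * ((m %/ N2 <= k %/ N2)%N%:R * (m %% N2 <= k %% N2)%N%:R).

Lemma delt_pair (V : pzRingType) (N2 m m' : nat) : (0 < N2)%N ->
  (delt m m' : V) = delt (m %/ N2)%N (m' %/ N2)%N * delt (m %% N2)%N (m' %% N2)%N.
Proof.
move=> h; rewrite /delt (pair_eq _ _ _ h).
by case: (_ == _); case: (_ == _); rewrite ?mul1r ?mul0r.
Qed.

Lemma Pp_last (V : pzRingType) (N1 N2 m : nat) : (0 < N1)%N -> (0 < N2)%N ->
  (m < N1 * N2)%N -> (Pp N2 (N1 * N2).-1 m : V) = delt m (N1 * N2).-1.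
Proof.
move=> h1 h2 hm; have [e1 e2] := last_div _ _ h1 h2.
rewrite /Pp e1 e2 !prednK // [RHS](@delt_pair V N2 _ _ h2) e1 e2.
have hi : (m %/ N2 < N1)%N by rewrite ltn_divLR.
have hj : (m %% N2 < N2)%N by rewrite ltn_pmod.
rewrite /delt (ltn_eqF hi) (ltn_eqF hj) !sub0r mulrNN.
by [].
Qed.

Lemma sumPp (V : comPzRingType) (N1 N2 k : nat) : (0 < N2)%N -> (k < N1 * N2)%N ->
  \sum_(m < N1 * N2) (Pp N2 k m : V) =
  (((k %/ N2).+1 < N1)%:R - 1) * (((k %% N2).+1 < N2)%:R - 1).
Proof.
move=> h2 hk.
rewrite (@sum_pair' V N1 N2 _ (fun a b =>
   (delt a (k %/ N2).+1 - delt a (k %/ N2)%N) * (delt b (k %% N2).+1 - delt b (k %% N2)%N))) //.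
rewrite -big_distrlr /=.
have hi : (k %/ N2 < N1)%N by rewrite ltn_divLR.
have hj : (k %% N2 < N2)%N by rewrite ltn_pmod.
rewrite !sumrB.
have D1' : forall N t, \sum_(a < N) (delt a t : V) = (t < N)%:R.
  by move=> N t; rewrite -[RHS]mulr1 -D1; apply: eq_bigr => a _; rewrite mulr1.
by rewrite !D1' hi hj.
Qed.

Lemma sumPg_even (N1 N2 k : nat) : (0 < N1)%N -> (0 < N2)%N -> (k < N1 * N2)%N ->
  (2 %| \sum_(m < N1 * N2) (Pg N1 N2 k m : int))%Z.
Proof.
move=> h1 h2 hk; rewrite /Pg -mulr_sumr.
case: (eqVneq k (N1 * N2).-1) => hl; first by apply: dvdz_mulr.
rewrite (@sumPp _ N1 N2 k h2 hk).
have hi : (k %/ N2 < N1)%N by rewrite ltn_divLR.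
have hj : (k %% N2 < N2)%N by rewrite ltn_pmod.
suff : ((k %/ N2).+1 < N1)%N || ((k %% N2).+1 < N2)%N.
  by case/orP => ->; rewrite subrr ?mulr0 ?mul0r.
apply: contraNT hl; rewrite negb_or -!leqNgt => /andP[a b].
have ei : (k %/ N2 = N1.-1)%N by lia.
have ej : (k %% N2 = N2.-1)%N by lia.
have [e1 e2] := last_div _ _ h1 h2.
by rewrite (pair_eq _ _ _ h2) e1 e2 ei ej !eqxx.
Qed.

Lemma latcomb (V : comPzRingType) (N1 N2 m m' : nat) : (0 < N1)%N -> (0 < N2)%N ->
  (m < N1 * N2)%N -> (m' < N1 * N2)%N ->
  \sum_(k < N1 * N2) (zm N1 N2 m k : V) * Pg N1 N2 k m' =
  delt m' m - delt m' (N1 * N2).-1.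
Proof.
move=> h1 h2 hm hm'.
set A : nat -> V := fun k => ((m %/ N2 <= k %/ N2)%N%:R * (m %% N2 <= k %% N2)%N%:R).
have e : forall k : 'I_(N1 * N2), (zm N1 N2 m k : V) * Pg N1 N2 k m' =
   A k * Pp N2 k m' - delt k (N1 * N2).-1 * (A k * Pp N2 k m').
  move=> k; rewrite /zm /Pg /delt -/(A k).
  by case: (eqVneq (k : nat) (N1 * N2).-1) => _ /=; ring.
rewrite (eq_bigr _ (fun k _ => e k)) sumrB (D1 _ _ _ (fun k => A k * Pp N2 k m')).
have hl : ((N1 * N2).-1 < N1 * N2)%N by rewrite prednK // muln_gt0 h1.
have [e1 e2] := last_div _ _ h1 h2.
have hi : (m %/ N2 < N1)%N by rewrite ltn_divLR.
have hj : (m %% N2 < N2)%N by rewrite ltn_pmod.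
have hi' : (m' %/ N2 < N1)%N by rewrite ltn_divLR.
have hj' : (m' %% N2 < N2)%N by rewrite ltn_pmod.
rewrite hl mul1r /A e1 e2 (@Pp_last V N1 N2 m' h1 h2 hm').
have -> : (m %/ N2 <= N1.-1)%N by lia.
have -> : (m %% N2 <= N2.-1)%N by lia.
rewrite !mul1r; congr (_ - _).
rewrite (@sum_pair' V N1 N2 _ (fun a b =>
   ((m %/ N2 <= a)%:R * (delt (m' %/ N2)%N a.+1 - delt (m' %/ N2)%N a)) *
   ((m %% N2 <= b)%:R * (delt (m' %% N2)%N b.+1 - delt (m' %% N2)%N b)))) //; last first.
  by move=> l; rewrite /Pp /delt; ring.
rewrite -big_distrlr /= !(tele V _ _ (fun a => delt _ a)).
rewrite (ltnW hi) (ltnW hj) !mul1r /delt (ltn_eqF hi') (ltn_eqF hj') !sub0r mulrNN.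
by rewrite [(m' == m)](pair_eq _ _ _ h2) -natrM mulnb.
Qed.


Section M.
Variable R : realType.
Variables (p1 p2 N1 N2 : nat).
Hypothesis hp1 : p1 = N1.*2.+1.
Hypothesis hp2 : p2 = N2.*2.+1.
Hypothesis h1 : (0 < N1)%N.
Hypothesis h2 : (0 < N2)%N.

Definition Qm : 'M[R]_(N1 * N2) :=
  \matrix_(m, l) (qq R p1 (m %/ N2) (idx1 N2 l) * qq R p2 (m %% N2) (idx2 N2 l)).

Lemma QQt : Qm *m Qm^T = 1%:M.
Proof.
apply/matrixP => m m'; rewrite !mxE.
have hi : (m %/ N2 < N1)%N by rewrite ltn_divLR.
have hj : (m %% N2 < N2)%N by rewrite ltn_pmod.
have hi' : (m' %/ N2 < N1)%N by rewrite ltn_divLR.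
have hj' : (m' %% N2 < N2)%N by rewrite ltn_pmod.
rewrite (@sum_pair' R N1 N2 _ (fun a b =>
   (qq R p1 (m %/ N2) a.+1 * qq R p1 (m' %/ N2) a.+1) *
   (qq R p2 (m %% N2) b.+1 * qq R p2 (m' %% N2) b.+1))) //; last first.
  by move=> l; rewrite !mxE /idx1 /idx2; ring.
rewrite -big_distrlr /= (@qq_orth R _ _ _ _ hp1) // (@qq_orth R _ _ _ _ hp2) //.
by rewrite [(m == m')](pair_eq _ _ _ h2) -natrM mulnb.
Qed.


Lemma cosemb_le2 (p a k : nat) : cosemb p a k <= 2 :> R.
Proof. by rewrite /cosemb -[X in _ <= X]mulr1 ler_pM2l ?cos_le1. Qed.

Lemma latQ (k : 'I_(N1 * N2)) :
  lat_vec p1 p2 N2 k = \row_m (Pg N1 N2 k m : R) *m Qm.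
Proof.
apply/rowP => l; rewrite !mxE.
have p10 : (0 < p1)%N by rewrite hp1.
have p20 : (0 < p2)%N by rewrite hp2.
have s1 : Num.sqrt (p1%:R : R) != 0 by rewrite sqrtr_eq0 -ltNge ltr0n.
have s2 : Num.sqrt (p2%:R : R) != 0 by rewrite sqrtr_eq0 -ltNge ltr0n.
have hi : (k %/ N2 < N1)%N by rewrite ltn_divLR.
have hj : (k %% N2 < N2)%N by rewrite ltn_pmod.
have hil : (l %/ N2 < N1)%N by rewrite ltn_divLR.
have hjl : (l %% N2 < N2)%N by rewrite ltn_pmod.
set c : R := if (k : nat) == (N1 * N2).-1 then 2 else 1.
rewrite /sig_alpha /sig_gamma natrM sqrtrM ?ler0n // sqrtrM ?subr_ge0 ?cosemb_le2 //.
set a := idx1 N2 l. set b := idx2 N2 l.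
have -> : Num.sqrt ((2 : R) - cosemb p1 a 1) * Num.sqrt (2 - cosemb p2 b 1) *
   (c * cosemb p1 a (idx1 N2 k) * cosemb p2 b (idx2 N2 k)) /
   (Num.sqrt p1%:R * Num.sqrt p2%:R) =
   c * (Num.sqrt (2 - cosemb p1 a 1) * cosemb p1 a (idx1 N2 k) / Num.sqrt p1%:R) *
   (Num.sqrt (2 - cosemb p2 b 1) * cosemb p2 b (idx2 N2 k) / Num.sqrt p2%:R).
  by rewrite /c; field; rewrite s1 s2.
rewrite /idx1 /idx2 !factor; last first.
- rewrite /a /idx1 hp1 -mul2n ltnS; apply/andP; split => //.
  by apply: leq_trans hil _; rewrite mul2n -addnn leq_addr.
- rewrite /b /idx2 hp2 -mul2n ltnS; apply/andP; split => //.
  by apply: leq_trans hjl _; rewrite mul2n -addnn leq_addr.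
rewrite (@sum_pair' R N1 N2 _ (fun a' b' =>
   (c * ((delt a' (k %/ N2).+1 - delt a' (k %/ N2)%N) * qq R p1 a' a)) *
   ((delt b' (k %% N2).+1 - delt b' (k %% N2)%N) * qq R p2 b' b))) //; last first.
  by move=> m; rewrite !mxE /Pg /Pp -/c; ring.
rewrite -big_distrlr /= -mulr_sumr.
rewrite (@D3 R N1 _ (fun a' => qq R p1 a' a)) ?(qq_last _ _ hp1) //.
rewrite (@D3 R N2 _ (fun b' => qq R p2 b' b)) ?(qq_last _ _ hp2) //.
- exact: qq_last.
- exact: qq_last.
Qed.
End M.


Lemma Pg_cast (R : realType) N1 N2 k m :
  ((Pg N1 N2 k m : int)%:~R : R) = Pg N1 N2 k m.
Proof.
rewrite /Pg /Pp /delt; case: ifP => _;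
by rewrite !rmorphM !rmorphB /= !rmorph_nat.
Qed.

Lemma half_param (p : nat) : prime p -> (5 <= p)%N ->
  p = ((p.-1)./2).*2.+1 /\ (0 < (p.-1)./2)%N.
Proof.
move=> pr h5; have [e|od] := even_prime pr; first by rewrite e in h5.
have := odd_double_half p.-1.
have -> : odd p.-1 = false by move: od; case: p {pr h5} => //= p /negbTE.
rewrite add0n => e; split; first by rewrite e prednK // (leq_trans _ h5).
rewrite -(leq_double 1) e; lia.
Qed.

Theorem proposition3p7 (R : realType) (p1 p2 : nat) :
  prime p1 -> prime p2 -> (5 <= p1)%N -> (5 <= p2)%N -> p1 != p2 ->
  let n1 := (p1.-1)./2 in
  let n2 := (p2.-1)./2 in
  let n := (n1 * n2)%N in
  rotated_Dn (@in_lattice R p1 p2 n n2).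
Proof.
move=> pr1 pr2 h51 h52 _ n1 n2 n.
have [hp1 h1] := half_param _ pr1 h51.
have [hp2 h2] := half_param _ pr2 h52.
rewrite -/n1 in hp1 h1; rewrite -/n2 in hp2 h2.
exists (Qm R p1 p2 n1 n2); split; first exact: QQt.
move=> x; split.
- case=> z ->.
  exists (\sum_(k < n) (z k)%:~R *: \row_m (Pg n1 n2 k m : R)); split; last first.
    rewrite mulmx_suml; apply: eq_bigr => k _.
    by rewrite (@latQ R p1 p2 n1 n2 hp1 hp2 h2) scalemxAl.
  exists (fun m => \sum_(k < n) z k * Pg n1 n2 k m); split; last first.
    apply/rowP => m; rewrite !mxE summxE rmorph_sum; apply: eq_bigr => k _.
    by rewrite !mxE rmorphM /= Pg_cast.
  rewrite exchange_big /=.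
  apply: rpred_sum => k _; rewrite -mulr_sumr; apply: dvdz_mull.
  exact: sumPg_even.
- case=> y [[w [hw ->]] ->].
  set S := \sum_(m < n) w m.
  pose z (k : 'I_n) : int := \sum_(m < n) w m * zm n1 n2 m k + (S %/ 2)%Z * delt k (n1 * n2).-1.
  exists z.
  suff hy : \row_m (w m)%:~R = \sum_(k < n) (z k)%:~R *: \row_m (Pg n1 n2 k m : R).
    rewrite hy mulmx_suml; apply: eq_bigr => k _.
    by rewrite (@latQ R p1 p2 n1 n2 hp1 hp2 h2) scalemxAl.
  apply/rowP => m'; rewrite !mxE summxE.
  under eq_bigr => k _ do rewrite !mxE -Pg_cast -rmorphM.
  rewrite -rmorph_sum; congr (_%:~R).
  rewrite /z.
  under eq_bigr => k _ do rewrite mulrDl mulr_suml.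
  rewrite big_split /= exchange_big /=.
  have hm' : (m' < n1 * n2)%N := ltn_ord m'.
  under eq_bigr => m _ do (under eq_bigr => k _ do rewrite -mulrA; rewrite -mulr_sumr (@latcomb _ n1 n2 m m' h1 h2 (ltn_ord m) hm')).
  have hl : ((n1 * n2).-1 < n1 * n2)%N by rewrite prednK // muln_gt0 h1.
  under [X in _ = _ + X]eq_bigr => k _ do rewrite -mulrA mulrCA.
  rewrite (D1 _ _ _ (fun k => (S %/ 2)%Z * Pg n1 n2 k m')) hl mul1r.
  rewrite /Pg eqxx (@Pp_last _ n1 n2 m' h1 h2 hm').
  under eq_bigr => m _ do rewrite mulrBr.
  rewrite sumrB -mulr_suml -/S.
  rewrite (bigD1 m') //= big1 ?addr0; last first.
    by move=> m hm; rewrite /delt eq_sym val_eqE (negbTE hm) mulr0.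
  rewrite /delt eqxx mulr1.
  have := divzK hw; rewrite -/S => e.
  rewrite -[in X in _ = _ - X + _]e; ring.
Qed.
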